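(* The set of synthetic flag positroids on $[n]$ equals the set of realizable flag positroids on $[n]$. Equivalently: a collection of subsets of $[n]$ is of the form $\{I\subseteq[n]: P_I(F)\neq 0\}$ for some $F\in\mathrm{Fl}_n^{\ge 0}$ if and only if it is of the form $\{I\subseteq[n]: P_I(F)\neq 0\}$ for some $F\in\mathrm{Fl}_n$ all of whose Plücker coordinates are nonnegative.
   Context: $\mathrm{Fl}_n$ is the real complete flag variety, flags represented by invertible $n\times n$ real matrices $M$ (the $i$-th subspace is the span of the top $i$ rows; representatives differ by left multiplication by invertible lower triangular matrices). $P_I(M)$ is the minor of $M$ in rows $1,\dots,|I|$ and columns $I$. ''All Plücker coordinates of $F$ nonnegative'' means some representing matrix has all $P_I\ge 0$. $\mathrm{Fl}_n^{\ge0}$ is the Euclidean closure of the set of flags having a totally positive representing matrix (all minors positive). A realizable flag positroid is the collection of indices of nonzero Plücker coordinates of a flag in $\mathrm{Fl}_n^{\ge 0}$ (a flag matroid); a synthetic flag positroid is the collection of indices of nonzero Plücker coordinates of a flag $F\in\mathrm{Fl}_n$ with $P_I(F)\ge 0$ for all $I\subseteq[n]$. *)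

(* Defs.v *)
From HB Require Import structures.
From mathcomp Require Import all_boot all_order all_algebra.
From mathcomp Require Import reals.
Set Implicit Arguments. Unset Strict Implicit. Unset Printing Implicit Defensive.
Import Order.TTheory GRing.Theory Num.Theory.
Local Open Scope ring_scope.

Lemma card_set_le_ord (n : nat) (I : {set 'I_n}) : (#|I| <= n)%N.
Proof. by rewrite -[X in (_ <= X)%N](card_ord n) max_card. Qed.

(* P_I(M): minor of M in rows 1..|I| and columns I (listed increasingly). *)
Definition plucker (R : realType) (n : nat) (M : 'M[R]_n) (I : {set 'I_n}) : R :=
  \det (\matrix_(i < #|I|, j < #|I|)
          M (widen_ord (card_set_le_ord I) i) (enum_val j)).

Definition totally_positive (R : realType) (n : nat) (M : 'M[R]_n) : Prop :=
  forall (k : nat) (r c : 'I_k -> 'I_n),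
    (0 < k)%N ->
    (forall i j : 'I_k, (i < j)%N -> (r i < r j)%N) ->
    (forall i j : 'I_k, (i < j)%N -> (c i < c j)%N) ->
    0 < \det (\matrix_(i < k, j < k) M (r i) (c j)).

Definition lower_tri_invertible (R : realType) (n : nat) (L : 'M[R]_n) : Prop :=
  L \in unitmx /\ forall i j : 'I_n, (i < j)%N -> L i j = 0.

(* The flag of the invertible matrix M lies in Fl_n^{>=0}: the closure (in the
   quotient topology of GL_n / B_-) of the flags having a totally positive
   representative.  Since the quotient map is open and the set is B_- saturated,
   this means M lies in the closure (in GL_n, entrywise topology) of
   { L *m A | L invertible lower triangular, A totally positive }. *)
Definition in_tnn_flag (R : realType) (n : nat) (M : 'M[R]_n) : Prop :=
  M \in unitmx /\
  forall eps : R, 0 < eps ->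
    exists L A : 'M[R]_n,
      [/\ lower_tri_invertible L, totally_positive A &
          forall i j : 'I_n, `|(L *m A) i j - M i j| < eps].

Definition nonzero_pluckers (R : realType) (n : nat) (M : 'M[R]_n)
  : {set {set 'I_n}} := [set I | plucker M I != 0].

Definition realizable_flag_positroid (R : realType) (n : nat)
    (C : {set {set 'I_n}}) : Prop :=
  exists M : 'M[R]_n, in_tnn_flag M /\ C = nonzero_pluckers M.

Definition synthetic_flag_positroid (R : realType) (n : nat)
    (C : {set {set 'I_n}}) : Prop :=
  exists M : 'M[R]_n, [/\ M \in unitmx,
    (forall I : {set 'I_n}, 0 <= plucker M I) & C = nonzero_pluckers M].

(* Main.v *)
Require Import Defs.
From HB Require Import structures.
From mathcomp Require Import all_boot all_order all_algebra.
From mathcomp Require Import reals.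
From mathcomp Require Import fingroup perm.
From mathcomp Require Import ring lra.
Set Implicit Arguments. Unset Strict Implicit. Unset Printing Implicit Defensive.
Import Order.TTheory GRing.Theory Num.Theory.
Local Open Scope ring_scope.

Definition incr k n (f : 'I_k -> 'I_n) : Prop :=
  forall i j : 'I_k, (i < j)%N -> (f i < f j)%N.
Definition incrb k n (f : 'I_k -> 'I_n) : bool :=
  [forall i : 'I_k, [forall j : 'I_k, (i < j)%N ==> (f i < f j)%N]].

Lemma incrP k n (f : 'I_k -> 'I_n) : reflect (incr f) (incrb f).
Proof.
apply: (iffP forallP) => [H i j lij | H i]; last first.
  by apply/forallP => j; apply/implyP => /H.
by move/forallP: (H i) => /(_ j) /implyP; apply.
Qed.

Lemma incr_inj k n (f : 'I_k -> 'I_n) : incr f -> injective f.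
Proof.
move=> H i j eij; case: (ltngtP i j) => [lij|lij|/val_inj //].
  by move: (H _ _ lij); rewrite eij ltnn.
by move: (H _ _ lij); rewrite eij ltnn.
Qed.

Lemma incr_ge k n (f : 'I_k -> 'I_n) : incr f -> forall i : 'I_k, (i <= f i)%N.
Proof.
move=> H [i hi]; elim: i hi => [|i IH] hi //=.
have hi' : (i < k)%N by apply: ltnW.
apply: leq_ltn_trans (IH hi') _; exact: H.
Qed.

Lemma incr_uniq k n (f g : 'I_k -> 'I_n) : incr f -> incr g ->
  (forall a, exists b, f a = g b) -> (forall a, exists b, g a = f b) -> f =1 g.
Proof.
move=> Hf Hg Hfg Hgf.
suff H : forall m (a : 'I_k), (a < m)%N -> f a = g a.
  by move=> a; apply: (H a.+1).
elim=> [//|m IH] a; rewrite ltnS leq_eqVlt => /orP [/eqP ea|]; last exact: IH.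
have IH' : forall b : 'I_k, (b < a)%N -> f b = g b by move=> b; rewrite ea; apply: IH.
case: (ltngtP (f a) (g a)) => [lt|lt|/val_inj //].
- have [b eb] := Hfg a.
  case: (ltngtP b a) => [lba|lab|/val_inj eba].
  + by move: (Hf _ _ lba); rewrite IH' // -eb ltnn.
  + by move: (Hg _ _ lab) (lt); rewrite -eb => h1 h2; move: (ltn_trans h1 h2); rewrite ltnn.
  + by move: lt; rewrite eb eba ltnn.
- have [b eb] := Hgf a.
  case: (ltngtP b a) => [lba|lab|/val_inj eba].
  + by move: (Hg _ _ lba); rewrite -IH' // -eb ltnn.
  + by move: (Hf _ _ lab) (lt); rewrite -eb => h1 h2; move: (ltn_trans h1 h2); rewrite ltnn.
  + by move: lt; rewrite eb eba ltnn.
Qed.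

Lemma sorted_enum_set n (S : {set 'I_n}) :
  sorted (fun x y : 'I_n => (x < y)%N) (enum S).
Proof.
rewrite /enum_mem -enumT; apply: sorted_filter.
  by move=> x y z; apply: ltn_trans.
have := iota_ltn_sorted 0 n; rewrite -val_enum_ord sorted_map; exact.
Qed.

Definition imgset k n (h : 'I_k -> 'I_n) : {set 'I_n} := h @: [set: 'I_k].
Definition sortf k n (h : 'I_k -> 'I_n) : {ffun 'I_k -> 'I_n} :=
  [ffun a => nth (h a) (enum (imgset h)) a].

Lemma size_enum_img k n (h : 'I_k -> 'I_n) : injective h ->
  size (enum (imgset h)) = k.
Proof. by move=> ih; rewrite -cardE card_imset // cardsT card_ord. Qed.

Lemma sortf_incr k n (h : 'I_k -> 'I_n) : injective h -> incr (sortf h).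
Proof.
move=> ih a b lab; rewrite !ffunE.
have tr : transitive (fun x y : 'I_n => (x < y)%N) by move=> x y z; apply: ltn_trans.
rewrite (set_nth_default (h a) (h b)); last by rewrite size_enum_img.
apply: (sorted_ltn_nth tr (h a) (sorted_enum_set _)) => //;
  by rewrite inE size_enum_img.
Qed.

Lemma sortf_perm k n (h : 'I_k -> 'I_n) : injective h ->
  exists s : 'S_k, forall a, h a = sortf h (s a).
Proof.
move=> ih; set S := enum (imgset h).
have hin a : h a \in S by rewrite mem_enum; apply: imset_f.
have hidx a : (index (h a) S < k)%N by rewrite -(size_enum_img ih) index_mem.
pose s0 (a : 'I_k) : 'I_k := Ordinal (hidx a).
have s0inj : injective s0.
  move=> a b /(congr1 val) /= e; apply: ih.
  by rewrite -(nth_index (h a) (hin a)) e nth_index.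
exists (perm s0inj) => a; rewrite permE ffunE /=.
by rewrite nth_index.
Qed.

Section CB.
Variable R : comNzRingType.

Lemma cb_step1 k n (P : 'M[R]_(k,n)) (Q : 'M[R]_(n,k)) :
  \det (P *m Q) = \sum_(h : {ffun 'I_k -> 'I_n})
     (\prod_i P i (h i)) * \det (rowsub h Q).
Proof.
rewrite /(\det _).
transitivity (\sum_(s : 'S_k) \sum_(h : {ffun 'I_k -> 'I_n})
   (-1) ^+ s * \prod_i (P i (h i) * Q (h i) (s i))).
  apply: eq_bigr => s _; rewrite -big_distrr /=; congr (_ * _).
  rewrite -(bigA_distr_bigA (fun i j => P i j * Q j (s i))) /=.
  by apply: eq_bigr => i _; rewrite mxE.
rewrite exchange_big; apply: eq_bigr => h _ /=.
rewrite big_distrr; apply: eq_bigr => s _ /=.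
rewrite big_split /= mulrCA; congr (_ * (_ * _)).
by apply: eq_bigr => i _; rewrite mxE.
Qed.

Definition compf k n (p : {ffun 'I_k -> 'I_n} * 'S_k) : {ffun 'I_k -> 'I_n} :=
  [ffun a => p.1 (p.2 a)].
Definition decf k n (h : {ffun 'I_k -> 'I_n}) : {ffun 'I_k -> 'I_n} * 'S_k :=
  (sortf h, odflt 1%g [pick s : 'S_k | compf (sortf h, s) == h]).

Lemma compf_decf k n (h : {ffun 'I_k -> 'I_n}) : injective h -> compf (decf h) = h.
Proof.
move=> ih; rewrite /decf; case: pickP => [s /eqP //|/= none].
have [s Hs] := sortf_perm ih.
move: (none s); rewrite /= => /negP; case; apply/eqP/ffunP => a.
by rewrite ffunE /= Hs.
Qed.

Lemma decf_compf k n (f : {ffun 'I_k -> 'I_n}) (s : 'S_k) : incr f ->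
  decf (compf (f, s)) = (f, s).
Proof.
move=> incf; set h := compf (f, s).
have ih : injective h.
  by move=> a b; rewrite !ffunE /= => /(incr_inj incf) /perm_inj.
have [s' Hs'] := sortf_perm ih.
have Esort : sortf h = f.
  apply/ffunP; apply: incr_uniq; first exact: sortf_incr.
  - exact: incf.
  - move=> b; exists (s ((s'^-1)%g b)); by rewrite -[in LHS](permKV s' b) -Hs' ffunE.
  - move=> a; exists (s' ((s^-1)%g a)); by rewrite -Hs' ffunE /= permKV.
rewrite /decf Esort; congr (_, _).
case: pickP => [s'' /eqP /ffunP Hs''|/= none]; last first.
  by move: (none s); rewrite eqxx.
apply/permP => a; move: (Hs'' a); rewrite !ffunE /=.
exact: (incr_inj incf).
Qed.

Lemma cauchy_binet k n (P : 'M[R]_(k,n)) (Q : 'M[R]_(n,k)) :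
  \det (P *m Q) = \sum_(f : {ffun 'I_k -> 'I_n} | incrb f)
     \det (colsub f P) * \det (rowsub f Q).
Proof.
rewrite cb_step1 (bigID (fun h : {ffun 'I_k -> 'I_n} => injectiveb h)) /=.
rewrite [X in _ + X]big1 ?addr0; last first.
  move=> h /injectivePn [i1 [i2 ne e]].
  rewrite (determinant_alternate ne) ?mulr0 // => j.
  by rewrite !mxE e.
rewrite (reindex_onto (@compf k n) (@decf k n)); last first.
  by move=> h /injectiveP; apply: compf_decf.
rewrite (eq_bigl (fun p : {ffun 'I_k -> 'I_n} * 'S_k => incrb p.1)); last first.
  move=> [f s] /=; apply/idP/idP.
    case/andP => /injectiveP inj /eqP e.
    have : incrb (decf (compf (f, s))).1 by apply/incrP; apply: sortf_incr.
    by rewrite e.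
  move=> /incrP incf; rewrite decf_compf // eqxx andbT.
  by apply/injectiveP => a b; rewrite !ffunE /= => /(incr_inj incf) /perm_inj.
transitivity (\sum_(f : {ffun 'I_k -> 'I_n} | incrb f) \sum_(s : 'S_k)
   (\prod_(i < k) P i (compf (f, s) i) * \det (rowsub (compf (f, s)) Q))).
  rewrite pair_big_dep; apply: eq_big => [[f s]|[f s] _] //=; by rewrite andbT.
apply: eq_bigr => f _.
rewrite [\det (colsub f P)]/(\det _) big_distrl /=; apply: eq_bigr => s _.
have -> : rowsub (compf (f, s)) Q = row_perm s (rowsub f Q).
  by apply/matrixP => i j; rewrite !mxE ffunE.
rewrite row_permE det_mulmx det_perm mulrA; congr (_ * _).
by rewrite mulrC; congr (_ * _); apply: eq_bigr => i _; rewrite !mxE ffunE.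
Qed.
End CB.

Section Cauchy.
Variable R : realFieldType.

Lemma cauchy_pos k (x y : 'I_k -> R) : (forall i, 0 < x i) -> (forall j, 0 < y j) ->
  (forall i j : 'I_k, (i < j)%N -> x i < x j) ->
  (forall i j : 'I_k, (i < j)%N -> y i < y j) ->
  0 < \det (\matrix_(i, j) (x i + y j)^-1).
Proof.
elim: k x y => [|k IH] x y xp yp xi yi; first by rewrite det_mx00.
set m : 'I_k.+1 := ord_max.
set K := \matrix_(i, j) (x i + y j)^-1.
pose al i := (x m + y m) / (x i + y m).
pose N := \matrix_(i, l) (((l == m) && (i != m))%:R * al i) : 'M[R]_k.+1.
pose E := 1%:M - N.
have dE : \det E = 1.
  rewrite -det_tr det_trig; last first.
    apply/is_trig_mxP => i j lij; rewrite !mxE.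
    have ne : (i != m) by rewrite -val_eqE /= ltn_eqF // (leq_trans lij) // -ltnS.
    by rewrite (negPf ne) /= mul0r subr0 -val_eqE /= gtn_eqF.
  by apply: big1 => i _; rewrite !mxE eqxx andbN mul0r subr0.
have EK i j : (E *m K) i j = K i j - (i != m)%:R * al i * K m j.
  rewrite mulmxBl mul1mx !mxE; congr (_ - _).
  rewrite (bigD1 m) //= big1 ?addr0; last first.
    by move=> l /negPf nl; rewrite !mxE nl /= mul0r mul0r.
  by rewrite !mxE eqxx /= mulrA.
have pos i j : 0 < x i + y j by apply: addr_gt0.
have -> : \det K = \det (E *m K) by rewrite det_mulmx dE mul1r.
rewrite (expand_det_col _ m) (bigD1 m) //= big1 ?addr0; last first.
  move=> i nim; rewrite EK nim /= !mxE /al.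
  have h1 := pos i m; have h2 := pos m m.
  suff -> : (x i + y m)^-1 - 1 * ((x m + y m) / (x i + y m)) * (x m + y m)^-1 = 0
    by rewrite mul0r.
  field; apply/andP; split; by rewrite gt_eqF.
rewrite EK eqxx /= !mul0r subr0.
apply: mulr_gt0; first by rewrite mxE invr_gt0.
rewrite /cofactor -signr_odd addnn odd_double expr0 mul1r.
pose x' i := x (lift m i); pose y' j := y (lift m j).
pose be i := (x m - x' i) / (x' i + y m).
pose ga j := (y m - y' j) / (x m + y' j).
have -> : row' m (col' m (E *m K)) =
   diag_mx (\row_i be i) *m (\matrix_(i, j) (x' i + y' j)^-1) *m diag_mx (\row_j ga j).
  apply/matrixP => i j; rewrite mul_mx_diag mul_diag_mx [LHS]mxE [LHS]mxE EK.
  have ne : lift m i != m by rewrite eq_sym neq_lift.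
  rewrite ne /= !mxE /al /be /ga /x' /y'.
  have h1 := pos (lift m i) (lift m j); have h2 := pos m m.
  have h3 := pos (lift m i) m; have h4 := pos m (lift m j).
  field; rewrite !gt_eqF //.
rewrite !det_mulmx !det_diag; apply: mulr_gt0; first apply: mulr_gt0.
- apply: prodr_gt0 => i _; rewrite mxE /be; apply: divr_gt0; last exact: pos.
  rewrite subr_gt0; apply: xi; by rewrite /m /= /bump (leqNgt k i) ltn_ord add0n ltn_ord.
- apply: IH => [i|j|i j lij|i j lij]; rewrite /x' /y'; try exact: xp; try exact: yp.
  + by apply: xi; rewrite /m /= /bump (leqNgt k i) (leqNgt k j) !ltn_ord !add0n.
  + by apply: yi; rewrite /m /= /bump (leqNgt k i) (leqNgt k j) !ltn_ord !add0n.
- apply: prodr_gt0 => j _; rewrite mxE /ga; apply: divr_gt0; last exact: pos.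
  rewrite subr_gt0; apply: yi; by rewrite /m /= /bump (leqNgt k j) ltn_ord add0n ltn_ord.
Qed.


End Cauchy.
Section GMat.
Variable R : realFieldType.

Definition gmat n (q : R) : 'M[R]_n :=
  \matrix_(i, j) ((2 * q ^+ i * q ^+ j) / (q ^+ (double i) + q ^+ (double j))).
Arguments gmat {n} q.

Lemma gmat_minor_pos n (q : R) k (r c : 'I_k -> 'I_n) : 1 < q -> incr r -> incr c ->
  0 < \det (\matrix_(a, b) gmat q (r a) (c b)).
Proof.
move=> q1 ir ic.
have q0 : 0 < q by apply: lt_trans q1.
have -> : \matrix_(a, b) gmat q (r a) (c b) =
    diag_mx (\row_a (2 * q ^+ (r a))) *m
    (\matrix_(a, b) (q ^+ (double (r a)) + q ^+ (double (c b)))^-1) *m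
    diag_mx (\row_b q ^+ (c b)).
  by apply/matrixP => a b; rewrite mul_mx_diag mul_diag_mx !mxE mulrAC.
rewrite !det_mulmx !det_diag; apply: mulr_gt0; first apply: mulr_gt0.
- by apply: prodr_gt0 => a _; rewrite mxE mulr_gt0 // exprn_gt0.
- apply: (cauchy_pos (x := fun a => q ^+ (double (r a))) (y := fun b => q ^+ (double (c b)))).
  + by move=> a; rewrite exprn_gt0.
  + by move=> a; rewrite exprn_gt0.
  + by move=> a b lab; rewrite ltr_eXn2l // ltn_double; apply: ir.
  + by move=> a b lab; rewrite ltr_eXn2l // ltn_double; apply: ic.
- by apply: prodr_gt0 => a _; rewrite mxE exprn_gt0.
Qed.

Lemma gmat_offdiag (q : R) (i j : nat) : 1 < q -> (i < j)%N ->
  0 <= (2 * q ^+ i * q ^+ j) / (q ^+ (double i) + q ^+ (double j)) <= 2 / q.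
Proof.
move=> q1 lij; have q0 : 0 < q by apply: lt_trans q1.
have D0 : 0 < q ^+ (double i) + q ^+ (double j) by rewrite addr_gt0 // exprn_gt0.
apply/andP; split.
  by rewrite divr_ge0 // ?ltW // mulr_gt0 ?exprn_gt0 // mulr_gt0 ?exprn_gt0.
rewrite ler_pdivrMr //.
have h1 : q * q ^+ i <= q ^+ j.
  by rewrite -exprS ler_eXn2l.
have h2 : q * (q ^+ i * q ^+ j) <= q ^+ (double j).
  by rewrite -addnn exprD mulrA ler_pM2r ?exprn_gt0.
have h3 : 0 <= q ^+ (double i) by rewrite exprn_ge0 // ltW.
apply: le_trans (_ : (2 / q) * (q * (q ^+ i * q ^+ j)) <= _).
  by rewrite -!mulrA mulKf ?gt_eqF.
rewrite ler_pM2l ?divr_gt0 //; apply: le_trans h2 _; by rewrite lerDr.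
Qed.

Lemma gmat_near n (q : R) (i j : 'I_n) : 1 < q ->
  `|gmat q i j - (i == j)%:R| <= 2 / q.
Proof.
move=> q1; have q0 : 0 < q by apply: lt_trans q1.
rewrite mxE; case: (ltngtP i j) => [lij|lji|/val_inj eij].
- have -> : (i == j) = false by rewrite -val_eqE /= ltn_eqF.
  have /andP [a b] := gmat_offdiag q1 lij.
  by rewrite subr0 ger0_norm.
- have -> : (i == j) = false by rewrite -val_eqE /= gtn_eqF.
  have := gmat_offdiag q1 lji; rewrite subr0 [_ * q ^+ i]mulrAC [q ^+ double j + _]addrC.
  by case/andP => a b; rewrite ger0_norm.
- rewrite eij eqxx.
  have e : q ^+ j * q ^+ j = q ^+ (double j) by rewrite -exprD addnn.
  have X0 : 0 < q ^+ (double j) by rewrite exprn_gt0.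
  have -> : 2 * q ^+ j * q ^+ j / (q ^+ (double j) + q ^+ (double j)) = 1.
    rewrite -[2 * _ * _]mulrA e; field; by rewrite gt_eqF // addr_gt0.
  by rewrite subrr normr0 divr_ge0 // ltW.
Qed.
End GMat.

Section CMat.
Variable R : realFieldType.

Definition pf (j : nat) : {poly R} :=
  \prod_(x <- [seq (m%:R : R) | m <- iota 0 j]) ('X - x%:P).

Definition Cmat n : 'M[R]_n := \matrix_(i, j) (pf j).[i%:R].
Arguments Cmat {n}.

Lemma Cmat_trig n : is_trig_mx (@Cmat n).
Proof.
apply/is_trig_mxP => i j lij; rewrite mxE; apply/eqP.
rewrite -/(root _ _) root_prod_XsubC; apply: map_f.
by rewrite mem_iota.
Qed.

Lemma Cmat_diag n (i : 'I_n) : 0 < @Cmat n i i.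
Proof.
rewrite mxE /pf horner_prod big_seq; apply: prodr_gt0 => x.
case/mapP => m; rewrite mem_iota add0n => /andP [_ lmi] ->.
by rewrite !hornerE subr_gt0 ltr_nat.
Qed.

Lemma prod_ge1 (I : Type) (r : seq I) (P : pred I) (F : I -> R) :
  (forall i, P i -> 1 <= F i) -> 1 <= \prod_(i <- r | P i) F i.
Proof.
move=> H; elim: r => [|a r IH]; first by rewrite big_nil.
rewrite big_cons; case: ifP => // Pa; exact: mulr_ege1 (H _ Pa) IH.
Qed.

Lemma Cmat_minor n k (r : 'I_k -> 'I_n) (le : (k <= n)%N) : incr r ->
  1 <= \det (\matrix_(a, b) @Cmat n (r a) (widen_ord le b)).
Proof.
move=> ir.
pose x a : R := (r a)%:R.
pose V : 'M[R]_k := \matrix_(a, c) x a ^+ c.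
pose T : 'M[R]_k := \matrix_(c, b) (pf b)`_c.
have -> : \matrix_(a, b) @Cmat n (r a) (widen_ord le b) = V *m T.
  apply/matrixP => a b; rewrite !mxE /=.
  rewrite (@horner_coef_wide _ k); last by rewrite size_prod_XsubC size_map size_iota.
  by apply: eq_bigr => c _; rewrite !mxE mulrC.
have dT : \det T = 1.
  rewrite -det_tr det_trig; last first.
    apply/is_trig_mxP => b c lbc; rewrite !mxE.
    apply: nth_default; by rewrite size_prod_XsubC size_map size_iota.
  apply: big1 => b _; rewrite !mxE.
  have := monic_prod_XsubC [seq (m%:R : R) | m <- iota 0 b] predT id.
  move=> /monicP; rewrite /lead_coef size_prod_XsubC size_map size_iota.
  by rewrite /pf.
have -> : V = (Vandermonde k (\row_a x a))^T.
  by apply/matrixP => a c; rewrite !mxE.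
rewrite det_mulmx dT mulr1 det_tr det_Vandermonde.
apply: prod_ge1 => i _; apply: prod_ge1 => j lij.
have h : (r i < r j)%N := ir i j lij.
by rewrite !mxE /x -natrB ?(ltnW h) // ler1n subn_gt0.
Qed.
End CMat.

Section Misc.
Variable R : realFieldType.

Lemma trig_invmx n (X : 'M[R]_n) : is_trig_mx X -> X \in unitmx -> is_trig_mx (invmx X).
Proof.
move=> tX0 uX; have /is_trig_mxP tX := tX0; apply/is_trig_mxP.
have dX : \prod_(i < n) X i i != 0 by rewrite -det_trig // -unitfE -unitmxE.
have Xd j : X j j != 0.
  by apply: contraNneq dX => e; rewrite (bigD1 j) //= e mul0r.
set Y := invmx X; have YX : Y *m X = 1%:M by rewrite mulVmx.
suff H : forall d (i j : 'I_n), (n <= j + d)%N -> (i < j)%N -> Y i j = 0.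
  by move=> i j; apply: (H n); rewrite leq_addl.
elim=> [|d IH] i j hjd lij; first by move: hjd; rewrite addn0 leqNgt ltn_ord.
have : (Y *m X) i j = 0 by rewrite YX !mxE -val_eqE /= ltn_eqF.
rewrite mxE (bigD1 j) //= big1 ?addr0; last first.
  move=> l nlj; case: (ltngtP l j) => [llj|ljl|/val_inj e]; last by rewrite e eqxx in nlj.
  - by rewrite tX // mulr0.
  - by rewrite (IH i l) ?mul0r // ?(ltn_trans lij) // (leq_trans hjd) // addnS -addSn leq_add2r.
by move/eqP; rewrite mulf_eq0 (negPf (Xd j)) orbF => /eqP.
Qed.

Lemma det_bound k (Y : 'M[R]_k) (B : R) : 0 <= B -> (forall i j, `|Y i j| <= B) ->
  `|\det Y| <= (k`!)%:R * B ^+ k.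
Proof.
move=> B0 HB; rewrite /(\det _).
apply: le_trans (ler_norm_sum _ _ _) _.
apply: le_trans (_ : \sum_(s : 'S_k) B ^+ k <= _).
  apply: ler_sum => s _; rewrite normrM normrX normrN normr1 expr1n mul1r normr_prod.
  have -> : B ^+ k = \prod_(i < k) B by rewrite prodr_const card_ord.
  by apply: ler_prod => i _; rewrite normr_ge0 HB.
by rewrite sumr_const card_Sn mulr_natl.
Qed.
End Misc.

Section Dom.
Variable R : realFieldType.


Lemma dom_pos (I : finType) (P : pred I) (i0 : I) (e : I -> nat) (a : I -> R)
   (t mu K N : R) :
  P i0 -> (forall i, P i -> i != i0 -> (e i0 < e i)%N) -> mu <= a i0 ->
  (forall i, `|a i| <= K) -> 0 < mu -> 0 < t -> t <= 1 -> #|I|%:R <= N ->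
  t * N * K < mu -> 0 < \sum_(i | P i) t ^+ e i * a i.
Proof.
move=> Pi0 He Ha HK mu0 t0 t1 HN Hsmall.
have K0 : 0 <= K by apply: le_trans (HK i0); apply: normr_ge0.
rewrite (bigD1 i0) //=.
set S := \sum_(i | _) _.
set u := t ^+ e i0.
have u0 : 0 < u by rewrite exprn_gt0.
have hS : `|S| <= N * (u * t * K).
  apply: le_trans (ler_norm_sum _ _ _) _.
  apply: le_trans (_ : \sum_(i | P i && (i != i0)) (u * t * K) <= _).
    apply: ler_sum => i /andP [Pi ni]; rewrite normrM normrX (gtr0_norm t0).
    apply: ler_pM => //; first by rewrite exprn_ge0 // ltW.
    rewrite /u -exprSr; apply: ler_wiXn2l; [exact: ltW | done | exact: He].
  rewrite sumr_const -mulr_natl; apply: ler_wpM2r.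
    by rewrite !mulr_ge0 // ltW.
  apply: le_trans HN; rewrite ler_nat; exact: max_card.
have h1 : u * mu <= u * a i0 by rewrite ler_wpM2l // ltW.
have h2 : 0 < u * (mu - t * N * K) by rewrite mulr_gt0 // subr_gt0.
have h3 : - `|S| <= S by rewrite lerNnormlW.
have e1 : N * (u * t * K) = u * (t * N * K) by ring.
rewrite e1 in hS.
have e2 : u * (mu - t * N * K) = u * mu - u * (t * N * K) by ring.
rewrite e2 in h2.
lra.
Qed.
End Dom.

Section Cont.
Variable R : realFieldType.

Lemma prod_diff k (z y : 'I_k -> R) (C d : R) : 1 <= C ->
  (forall i, `|z i| <= C) -> (forall i, `|y i| <= C) -> (forall i, `|z i - y i| <= d) ->
  `|\prod_i z i - \prod_i y i| <= k%:R * C ^+ k * d.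
Proof.
elim: k z y => [|k IH] z y C1 Hz Hy Hd.
  by rewrite !big_ord0 subrr normr0 mul0r mul0r.
have d0 : 0 <= d by apply: le_trans (Hd ord0); apply: normr_ge0.
have C0 : 0 <= C by apply: le_trans C1.
rewrite !big_ord_recr /=.
set Pz := \prod_(i < k) _; set Py := \prod_(i < k) _.
set zk := z ord_max; set yk := y ord_max.
have hPz : `|Pz| <= C ^+ k.
  rewrite normr_prod -[X in _ <= _ ^+ X](card_ord k) -prodr_const.
  by apply: ler_prod => i _; rewrite normr_ge0 Hz.
have hdiff : `|Pz - Py| <= k%:R * C ^+ k * d.
  by apply: IH => // i.
have key : forall a b c e : R, a * c - b * e = a * (c - e) + (a - b) * e.
  by move=> *; ring.
rewrite key.
apply: le_trans (ler_normD _ _) _; rewrite !normrM.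
have h1 : `|Pz| * `|zk - yk| <= C ^+ k * d.
  by apply: ler_pM; [exact: normr_ge0 | exact: normr_ge0 | exact: hPz | exact: Hd].
have h2 : `|Pz - Py| * `|yk| <= (k%:R * C ^+ k * d) * C.
  by apply: ler_pM; [exact: normr_ge0 | exact: normr_ge0 | exact: hdiff | exact: Hy].
have h3 : C ^+ k <= C ^+ k.+1 by rewrite exprS ler_peMl // exprn_ge0.
have h4 : C ^+ k * d <= C ^+ k.+1 * d by rewrite ler_wpM2r.
have e : (k.+1)%:R * C ^+ k.+1 * d = C ^+ k.+1 * d + (k%:R * C ^+ k * d) * C.
  have key2 : forall (a b c x : R), (a + 1) * (b * c) * d = b * c * d + a * b * d * c.
    by move=> *; ring.
  by rewrite exprSr -addn1 natrD key2.
rewrite e; apply: lerD => //; exact: le_trans h1 h4.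
Qed.

Lemma entry_le_sum m p (Y : 'M[R]_(m, p)) i j :
  `|Y i j| <= \sum_i' \sum_j' `|Y i' j'|.
Proof.
rewrite (bigD1 i) //= (bigD1 j) //= -addrA lerDl addr_ge0 //;
  by apply: sumr_ge0 => *; rewrite ?sumr_ge0.
Qed.

Lemma det_cont k (Y : 'M[R]_k) (eps : R) : 0 < eps ->
  exists2 del : R, 0 < del & forall Z : 'M[R]_k,
    (forall i j, `|Z i j - Y i j| < del) -> `|\det Z - \det Y| < eps.
Proof.
move=> e0.
set C := 2 + \sum_i \sum_j `|Y i j|.
have S0 : 0 <= \sum_i \sum_j `|Y i j| by apply: sumr_ge0 => *; apply: sumr_ge0.
have C1 : 1 <= C by rewrite /C; lra.
set W := (k`!)%:R * (k%:R * C ^+ k * 1).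
have W0 : 0 <= W by rewrite !mulr_ge0 // exprn_ge0 // (le_trans _ C1).
exists (Num.min 1 (eps / (W + 1))).
  by rewrite lt_min ltr01 divr_gt0 // ltr_wpDl.
move=> Z HZ.
have Hd i j : `|Z i j - Y i j| <= Num.min 1 (eps / (W + 1)) by apply: ltW.
set d := Num.min 1 _ in Hd HZ.
have d1 : d <= 1 by rewrite /d ge_min lexx.
have de : d <= eps / (W + 1) by rewrite /d ge_min lexx orbT.
have W1 : 0 < W + 1 by rewrite ltr_wpDl.
have d0 : 0 <= d by rewrite /d le_min ler01 /= divr_ge0 // ltW.
rewrite /(\det _) /(\det Y) -sumrB.
apply: le_lt_trans (ler_norm_sum _ _ _) _.
apply: le_lt_trans (_ : _ <= \sum_(s : 'S_k) (k%:R * C ^+ k * d)) _.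
  apply: ler_sum => s _; rewrite -mulrBr normrM normrX normrN1 expr1n mul1r.
  apply: prod_diff => // i.
  - apply: le_trans (_ : `|Y i (s i)| + `|Z i (s i) - Y i (s i)| <= _).
      by rewrite -{1}(subrK (Y i (s i)) (Z i (s i))) addrC ler_normD.
    have := entry_le_sum Y i (s i); have := Hd i (s i); rewrite /C; lra.
  - by apply: le_trans (entry_le_sum Y i (s i)) _; rewrite /C; lra.
rewrite sumr_const card_Sn.
have -> : (k%:R * C ^+ k * d) *+ k`! = W * d by rewrite /W -mulr_natl mulr1 !mulrA.
apply: le_lt_trans (_ : _ <= W * (eps / (W + 1))) _; first by rewrite ler_wpM2l.
rewrite mulrA ltr_pdivrMr // mulrDr mulr1 mulrC ltrDl //.
Qed.
End Cont.

Section Main.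
Variable R : realType.

Lemma det_cast m k (e : m = k) (A : 'M[R]_m) (B : 'M[R]_k) :
  (forall i j, A i j = B (cast_ord e i) (cast_ord e j)) -> \det A = \det B.
Proof.
case: k / e B => B H; congr (\det _); apply/matrixP => i j; by rewrite H !cast_ord_id.
Qed.

Lemma sortf_id k n (c : 'I_k -> 'I_n) : incr c -> forall a, sortf c a = c a.
Proof.
move=> ic; have ih := incr_inj ic; have [s Hs] := sortf_perm ih.
apply: incr_uniq; [exact: sortf_incr | exact: ic | |].
- move=> b; exists ((s^-1)%g b); by rewrite Hs permKV.
- move=> a; exists (s a); exact: Hs.
Qed.

Lemma card_imgset k n (c : 'I_k -> 'I_n) : incr c -> #|imgset c| = k.
Proof. by move=> ic; rewrite card_imset ?cardsT ?card_ord //; apply: incr_inj. Qed.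

Lemma enum_val_incr n (S : {set 'I_n}) : incr (fun j : 'I_#|S| => (enum_val j : 'I_n)).
Proof.
move=> i j lij /=; rewrite (enum_val_nth (enum_val i)) (enum_val_nth (enum_val i) j).
have tr : transitive (fun x y : 'I_n => (x < y)%N) by move=> x y z; apply: ltn_trans.
apply: (sorted_ltn_nth tr _ (sorted_enum_set S)) => //; rewrite ?inE -?cardE //.
Qed.

Lemma widen_incr k n (le : (k <= n)%N) : incr (widen_ord le).
Proof. by move=> i j. Qed.

Lemma plucker_incr n (M : 'M[R]_n) k (c : 'I_k -> 'I_n) (le : (k <= n)%N) : incr c ->
  plucker M (imgset c) = \det (\matrix_(i, j) M (widen_ord le i) (c j)).
Proof.
move=> ic; rewrite /plucker; apply: (det_cast (e := card_imgset ic)) => i j; rewrite !mxE.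
congr (M _ _); first by apply: val_inj.
rewrite -[RHS](sortf_id ic) ffunE (enum_val_nth (c (cast_ord (card_imgset ic) j))) /=.
apply: set_nth_default; by rewrite -cardE.
Qed.

Lemma flag_pos_mul n (M G : 'M[R]_n) : M \in unitmx -> (forall I, 0 <= plucker M I) ->
  (forall k (r c : 'I_k -> 'I_n), incr r -> incr c ->
       0 < \det (\matrix_(a, b) G (r a) (c b))) ->
  forall k (le : (k <= n)%N) (c : 'I_k -> 'I_n), incr c ->
    0 < \det (\matrix_(a, b) (M *m G) (widen_ord le a) (c b)).
Proof.
move=> uM hpos hG k le c ic.
set w := widen_ord le.
have -> : \matrix_(a, b) (M *m G) (w a) (c b) = rowsub w M *m colsub c G.
  by apply/matrixP => a b; rewrite !mxE; apply: eq_bigr => l _; rewrite !mxE.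
rewrite cauchy_binet.
have hA f : incrb f -> 0 <= \det (colsub f (rowsub w M)).
  move/incrP => incf; have := hpos (imgset f); rewrite (plucker_incr M le incf).
  suff -> : colsub f (rowsub w M) = \matrix_(i, j) M (w i) (f j) by [].
  by apply/matrixP => a b; rewrite !mxE.
have hB f : incrb f -> 0 < \det (rowsub f (colsub c G)).
  move/incrP => incf; have := hG _ _ _ incf ic.
  suff -> : rowsub f (colsub c G) = \matrix_(i, j) G (f i) (c j) by [].
  by apply/matrixP => a b; rewrite !mxE.
have [f0 incf0 nz] : exists2 f : {ffun 'I_k -> 'I_n}, incrb f &
     \det (colsub f (rowsub w M)) != 0.
  have := cauchy_binet (rowsub w M) (colsub w (invmx M)).
  have -> : rowsub w M *m colsub w (invmx M) = 1%:M.
    apply/matrixP => a b; rewrite !mxE.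
    have E : (M *m invmx M) (w a) (w b) = (1%:M : 'M[R]_n) (w a) (w b) by rewrite mulmxV.
    rewrite !mxE in E.
    have ew : (w a == w b) = (a == b) by rewrite -val_eqE /= val_eqE.
    by rewrite -ew -E; apply: eq_bigr => l _; rewrite !mxE.
  rewrite det1.
  case: (boolP [exists f : {ffun 'I_k -> 'I_n},
      incrb f && (\det (colsub f (rowsub w M)) != 0)]) => [/existsP [f /andP [h1 h2]]|/existsPn H].
    by move=> _; exists f.
  rewrite big1; first by move/eqP; rewrite oner_eq0.
  move=> f incf.
  by have := H f; rewrite incf /= negbK => /eqP ->; rewrite mul0r.
rewrite (bigD1 f0) //=.
have ha : 0 < \det (colsub f0 (rowsub w M)) * \det (rowsub f0 (colsub c G)).
  by rewrite mulr_gt0 // ?hB // lt_def nz hA.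
apply: (lt_le_trans ha); rewrite lerDl sumr_ge0 // => f /andP [incf _].
by rewrite mulr_ge0 // ?hA // ltW // hB.
Qed.
End Main.

Lemma fact_mono k n : (k <= n)%N -> (k`! <= n`!)%N.
Proof.
elim: n => [|n IH]; first by rewrite leqn0 => /eqP ->.
rewrite leq_eqVlt => /orP [/eqP -> //|]; rewrite ltnS => /IH h.
by apply: leq_trans h _; rewrite factS leq_pmull.
Qed.

Section Main2.
Variable R : realType.

Lemma synth_to_real n (M : 'M[R]_n) : M \in unitmx ->
  (forall I, 0 <= plucker M I) -> in_tnn_flag M.
Proof.
move=> uM hpos; split => // eps e0.
pose SM := \sum_i \sum_j `|M i j|.
have SM0 : 0 <= SM by apply: sumr_ge0 => i _; apply: sumr_ge0.
pose q := 1 + 2 * (SM + 1) / eps.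
have SM1 : 0 < SM + 1 by rewrite ltr_wpDl.
have q1 : 1 < q by rewrite /q ltrDl divr_gt0 // mulr_gt0.
have q0 : 0 < q by apply: lt_trans q1.
pose G : 'M[R]_n := @gmat R n q.
pose M' := M *m G.
have close i j : `|M' i j - M i j| < eps.
  have -> : M' i j - M i j = \sum_l M i l * (G l j - (l == j)%:R).
    rewrite /M' mxE; under [RHS]eq_bigr do rewrite mulrBr.
    rewrite sumrB; congr (_ - _).
    rewrite (bigD1 j) //= eqxx mulr1 big1 ?addr0 // => l /negPf ->; by rewrite mulr0.
  apply: le_lt_trans (ler_norm_sum _ _ _) _.
  apply: le_lt_trans (_ : _ <= \sum_l `|M i l| * (2 / q)) _.
    by apply: ler_sum => l _; rewrite normrM ler_wpM2l // gmat_near.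
  rewrite -mulr_suml.
  have hrow : \sum_l `|M i l| <= SM.
    by rewrite /SM [X in _ <= X](bigD1 i) //= lerDl sumr_ge0 // => *; apply: sumr_ge0.
  apply: le_lt_trans (_ : _ <= SM * (2 / q)) _.
    by rewrite ler_wpM2r // divr_ge0 // ltW.
  rewrite mulrA ltr_pdivrMr //.
  have -> : eps * q = eps + 2 * (SM + 1) by rewrite /q; field; rewrite gt_eqF.
  lra.
have Gpos k (r c : 'I_k -> 'I_n) : incr r -> incr c ->
    0 < \det (\matrix_(a, b) G (r a) (c b)).
  by move=> ir ic; apply: gmat_minor_pos.
have M'flag := flag_pos_mul uM hpos Gpos.
have M'pl S : 0 < plucker M' S.
  by rewrite /plucker; apply: M'flag; apply: enum_val_incr.
pose mu := \big[Num.min/1]_(S : {set 'I_n}) plucker M' S.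
have mu0 : 0 < mu by apply: lt_bigmin => // S _; exact: M'pl.
have muS S : mu <= plucker M' S by apply: bigmin_le.
pose C : 'M[R]_n := @Cmat R n.
pose B := 1 + \sum_i \sum_j `|C i j| + \sum_i \sum_j `|M' i j|.
have sC : 0 <= \sum_i \sum_j `|C i j| by apply: sumr_ge0 => *; apply: sumr_ge0.
have sM : 0 <= \sum_i \sum_j `|M' i j| by apply: sumr_ge0 => *; apply: sumr_ge0.
have B1 : 1 <= B by rewrite /B; lra.
have BC i j : `|C i j| <= B by have := entry_le_sum C i j; rewrite /B; lra.
have BM i j : `|M' i j| <= B by have := entry_le_sum M' i j; rewrite /B; lra.
pose K := ((n`!)%:R * B ^+ n) ^+ 2.
pose N : R := (n ^ n)%:R.
have K0 : 0 <= K by rewrite /K exprn_ge0 // mulr_ge0 // exprn_ge0 // (le_trans _ B1).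
have N0 : 0 <= N by rewrite /N ler0n.
pose D := N * K + mu + 1.
have D0 : 0 < D by rewrite /D; have := mulr_ge0 N0 K0; lra.
pose t := mu / D.
have t0 : 0 < t by rewrite /t divr_gt0.
have t1 : t <= 1 by rewrite /t ler_pdivrMr // mul1r /D; have := mulr_ge0 N0 K0; lra.
have tsmall : t * N * K < mu.
  have -> : t * N * K = mu * (N * K / D) by rewrite /t; field; rewrite gt_eqF.
  rewrite gtr_pMr // ltr_pdivrMr // mul1r /D; lra.
pose X : 'M[R]_n := C *m diag_mx (\row_j t ^+ j).
have Xe i j : X i j = C i j * t ^+ j by rewrite /X mul_mx_diag !mxE.
have Xtrig : is_trig_mx X.
  apply/is_trig_mxP => i j lij; rewrite Xe.
  by have /is_trig_mxP h := @Cmat_trig R n; rewrite h // mul0r.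
have uX : X \in unitmx.
  rewrite unitmxE unitfE (det_trig Xtrig); apply/prodf_neq0 => i _.
  by rewrite Xe mulf_neq0 // gt_eqF // ?exprn_gt0 // Cmat_diag.
exists (invmx X), (X *m M'); split.
- by split; [rewrite unitmx_inv | apply/is_trig_mxP; apply: trig_invmx].
- move=> k r c k0 ir ic.
  have le : (k <= n)%N.
    have kp : (k.-1 < k)%N by rewrite prednK.
    have h := incr_ge ir (Ordinal kp); move: h => /= h.
    by rewrite -(prednK k0); apply: leq_ltn_trans h (ltn_ord _).
  have n0 : (0 < n)%N by apply: leq_trans le.
  have -> : \matrix_(a, b) (X *m M') (r a) (c b) = rowsub r X *m colsub c M'.
    by apply/matrixP => a b; rewrite !mxE; apply: eq_bigr => l _; rewrite !mxE.
  rewrite cauchy_binet.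
  set w := widen_ord le.
  pose f0 : {ffun 'I_k -> 'I_n} := [ffun a => w a].
  pose e (f : {ffun 'I_k -> 'I_n}) := (\sum_b (f b : nat))%N.
  pose af (f : {ffun 'I_k -> 'I_n}) :=
    \det (\matrix_(a, b) C (r a) (f b)) * \det (rowsub f (colsub c M')).
  rewrite (eq_bigr (fun f => t ^+ e f * af f)); last first.
    move=> f _.
    have -> : colsub f (rowsub r X) =
        \matrix_(a, b) C (r a) (f b) *m diag_mx (\row_b t ^+ (f b)).
      by apply/matrixP => a b; rewrite mul_mx_diag [LHS]mxE [LHS]mxE Xe !mxE.
    rewrite det_mulmx det_diag /af /e -prodrXr.
    rewrite (eq_bigr (fun b => t ^+ (f b))) => [|b _]; last by rewrite mxE.
    have key : forall a p d : R, a * p * d = p * (a * d) by move=> *; ring.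
    by rewrite key.
  apply: (@dom_pos _ _ _ f0 e af t mu K N) => //.
  + by apply/incrP => a b lab; rewrite !ffunE.
  + move=> f /incrP incf nf.
    have [b nb] : exists b, f b != f0 b.
      case: (boolP [exists b, f b != f0 b]) => [/existsP //|/existsPn H].
      exfalso; move/negP: nf; apply; apply/eqP/ffunP => b.
      by move: (H b); rewrite negbK => /eqP.
    have hge b' : (f0 b' <= f b')%N by rewrite ffunE /=; apply: incr_ge.
    have hlt : (f0 b < f b)%N by rewrite ltn_neqAle val_eqE eq_sym nb hge.
    rewrite /e (bigD1 b) //= [X in (_ < X)%N](bigD1 b) //=.
    have hs : (\sum_(i | i != b) f0 i <= \sum_(i | i != b) f i)%N.
      by apply: leq_sum => i _; apply: hge.
    by rewrite -addSn leq_add.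
  + rewrite /af.
    have -> : \matrix_(a, b) C (r a) (f0 b) = \matrix_(a, b) C (r a) (w b).
      by apply/matrixP => a b; rewrite !mxE ffunE.
    have h1 := @Cmat_minor R n k r le ir.
    have h2 : mu <= \det (rowsub f0 (colsub c M')).
      apply: le_trans (muS (imgset c)) _; rewrite (plucker_incr M' le ic).
      rewrite le_eqVlt; apply/orP; left; apply/eqP; congr (\det _).
      by apply/matrixP => a b; rewrite !mxE ffunE.
    rewrite -[mu]mul1r; apply: ler_pM => //; exact: ltW.
  + move=> f; rewrite /af normrM /K expr2.
    have B0 : 0 <= B by apply: le_trans B1.
    have hk : (k`!)%:R * B ^+ k <= (n`!)%:R * B ^+ n.
      apply: ler_pM; rewrite ?ler0n ?exprn_ge0 // ?ler_nat ?fact_mono //.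
      exact: ler_weXn2l.
    apply: ler_pM; rewrite ?normr_ge0 //; apply: le_trans hk; apply: det_bound => // a b.
      by rewrite mxE; exact: BC.
    by rewrite mxE mxE; exact: BM.
  + by rewrite card_ffun !card_ord ler_nat leq_pexp2l.
- by move=> i j; rewrite mulmxA mulVmx // mul1mx; exact: close.
Qed.
End Main2.

Section Main3.
Variable R : realType.

Lemma det0_size k (Y : 'M[R]_k) : k = 0%N -> \det Y = 1.
Proof. by move=> e; subst k; apply: det_mx00. Qed.

Lemma plucker_TP n (A : 'M[R]_n) : totally_positive A -> forall S, 0 < plucker A S.
Proof.
move=> tA S; case: (posnP #|S|) => [e|k0]; first by rewrite /plucker det0_size.
rewrite /plucker; apply: tA => //; exact: enum_val_incr.
Qed.

Lemma plucker_LA n (L A : 'M[R]_n) : (forall i j : 'I_n, (i < j)%N -> L i j = 0) ->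
  forall S, plucker (L *m A) S =
    (\prod_(i < n | (i < #|S|)%N) L i i) * plucker A S.
Proof.
move=> hL S; rewrite /plucker.
set le := card_set_le_ord S; set w := widen_ord le.
have -> : \matrix_(i < #|S|, j < #|S|) (L *m A) (w i) (enum_val j) =
    \matrix_(i < #|S|, j < #|S|) L (w i) (w j) *m \matrix_(i < #|S|, j < #|S|) A (w i) (enum_val j).
  apply/matrixP => i j; rewrite !mxE.
  rewrite (bigID (fun l : 'I_n => (l < #|S|)%N)) /= [X in _ + X]big1 ?addr0; last first.
    move=> l; rewrite -leqNgt => hl; rewrite hL ?mul0r //.
    by apply: leq_trans hl; rewrite /= ltn_ord.
  rewrite (big_ord_narrow le); apply: eq_bigr => l _; by rewrite !mxE.
rewrite det_mulmx det_trig; last first.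
  by apply/is_trig_mxP => i j lij; rewrite mxE hL.
rewrite (big_ord_narrow le); congr (_ * _); apply: eq_bigr => i _; by rewrite mxE.
Qed.

Lemma no_mixed n (M : 'M[R]_n) : in_tnn_flag M -> forall I J : {set 'I_n},
  #|I| = #|J| -> 0 < plucker M I -> plucker M J < 0 -> False.
Proof.
move=> [uM hM] I J eIJ pI pJ.
have [d1 d10 H1] := det_cont (\matrix_(i, j) M (widen_ord (card_set_le_ord I) i) (enum_val j)) pI.
have pJ' : 0 < - plucker M J by rewrite oppr_gt0.
have [d2 d20 H2] := det_cont (\matrix_(i, j) M (widen_ord (card_set_le_ord J) i) (enum_val j)) pJ'.
have dm : 0 < Num.min d1 d2 by rewrite lt_min d10 d20.
have [L [A [[uL hL] tA close]]] := hM (Num.min d1 d2) dm.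
have zI : 0 < plucker (L *m A) I.
  have := H1 (\matrix_(i, j) (L *m A) (widen_ord (card_set_le_ord I) i) (enum_val j)).
  rewrite -/(plucker _ I) -/(plucker _ I) => h.
  have {}h : `|plucker (L *m A) I - plucker M I| < plucker M I.
    apply: h => i j; have c := close (widen_ord (card_set_le_ord I) i) (enum_val j).
    rewrite !mxE in c *; apply: lt_le_trans c _; by rewrite ge_min lexx.
  have h4 : - `|plucker (L *m A) I - plucker M I| <= plucker (L *m A) I - plucker M I.
    by rewrite lerNnormlW.
  lra.
have zJ : plucker (L *m A) J < 0.
  have := H2 (\matrix_(i, j) (L *m A) (widen_ord (card_set_le_ord J) i) (enum_val j)).
  rewrite -/(plucker _ J) -/(plucker _ J) => h.
  have {}h : `|plucker (L *m A) J - plucker M J| < - plucker M J.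
    apply: h => i j; have c := close (widen_ord (card_set_le_ord J) i) (enum_val j).
    rewrite !mxE in c *; apply: lt_le_trans c _; by rewrite ge_min lexx orbT.
  have h4 := ler_norm (plucker (L *m A) J - plucker M J).
  lra.
rewrite !plucker_LA // in zI zJ; rewrite eIJ in zI.
have pAI := plucker_TP tA I; have pAJ := plucker_TP tA J.
move: zI zJ; set p := \prod_(i < n | _) _ => zI zJ.
have p0 : 0 < p by move: zI; rewrite pmulr_lgt0.
by have := mulr_gt0 p0 pAJ; rewrite ltNge (ltW zJ).
Qed.
End Main3.

Section Main4.
Variable R : realType.

Lemma real_to_synth n (M : 'M[R]_n) : in_tnn_flag M -> exists M2 : 'M[R]_n,
  [/\ M2 \in unitmx, (forall I, 0 <= plucker M2 I) &
      nonzero_pluckers M = nonzero_pluckers M2].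
Proof.
move=> hM; have uM := hM.1.
pose s (k : nat) : R :=
  if [exists S : {set 'I_n}, (#|S| == k) && (plucker M S < 0)] then -1 else 1.
have s2 k : s k * s k = 1 by rewrite /s; case: ifP => _; rewrite ?mulrNN mulr1.
have sn0 k : s k != 0.
  by apply/eqP => e; move: (s2 k); rewrite e mul0r => /eqP; rewrite eq_sym oner_eq0.
have s0 : s 0%N = 1.
  rewrite /s; case: ifP => // /existsP [S /andP [/eqP e h]]; exfalso.
  by move: h; rewrite /plucker det0_size // ltNge ler01.
pose D : 'M[R]_n := diag_mx (\row_(i < n) (s i * s i.+1)).
have tele k : \prod_(i < k) (s i * s i.+1) = s 0%N * s k.
  elim: k => [|k IH]; first by rewrite big_ord0 s2.
  by rewrite big_ord_recr /= IH -mulrA (mulrA (s k)) s2 mul1r.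
have plD S : plucker (D *m M) S = s #|S| * plucker M S.
  rewrite plucker_LA; last first.
    move=> i j lij; rewrite /D !mxE.
    by have -> : (i == j) = false by rewrite -val_eqE /= ltn_eqF.
  congr (_ * _); rewrite (big_ord_narrow (card_set_le_ord S)).
  rewrite (eq_bigr (fun i : 'I_#|S| => s i * s i.+1)); last first.
    by move=> i _; rewrite /D !mxE eqxx mulr1n.
  by rewrite tele s0 mul1r.
exists (D *m M); split.
- rewrite unitmx_mul uM andbT unitmxE det_diag unitfE; apply/prodf_neq0 => i _.
  by rewrite mxE mulf_neq0.
- move=> I; rewrite plD /s; case: ifP => [/existsP [S /andP [/eqP e h]]|/negbT /existsPn H].
    rewrite mulN1r oppr_ge0 leNgt; apply/negP => pos.
    exact: (no_mixed hM (esym e) pos h).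
  rewrite mul1r leNgt; apply/negP => neg.
  by have := H I; rewrite eqxx neg.
- by apply/setP => S; rewrite !inE plD mulf_eq0 negb_or sn0.
Qed.
End Main4.

Theorem mainTheorem5 (R : realType) (n : nat) (C : {set {set 'I_n}}) :
  synthetic_flag_positroid R C <-> realizable_flag_positroid R C.
Proof.
split.
- case=> M [uM hpos ->]; exists M; split => //; exact: synth_to_real.
- case=> M [hM ->]; have [M2 [u2 p2 e2]] := real_to_synth hM.
  by exists M2; split.
Qed.
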